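(* For all integers $b>0$ and $n>0$, $\sum_{i=0}^{n}\Big(2^{bi}\prod_{j=i}^{n}(1-2^j)\Big)<0.$ *)

(* Defs.v *)
From mathcomp Require Import all_boot all_order all_algebra.

(* Main.v *)
Require Import Defs.
From mathcomp Require Import all_boot all_order all_algebra.
From mathcomp Require Import ring lra zify.
Import Order.TTheory GRing.Theory Num.Theory.
Local Open Scope ring_scope.

Fixpoint g (b n : nat) : int :=
  match n with
  | 0 => 1
  | n'.+1 => (2 : int) ^+ (b * n') - ((2 : int) ^+ n' - 1) * g b n'
  end.

Lemma g_rel b n :
  g b.+1 n.+1 = (2 : int) ^+ (n * b) + ((2 : int) ^+ n - 1) * ((2 : int) ^+ b - 1) * g b n.
Proof.
elim: n => [|n IH].
  by rewrite /= !expr0 muln0 subrr !mul0r ?subr0 ?addr0 ?mulr0.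
have -> : g b.+1 n.+2 = (2:int) ^+ (b.+1 * n.+1) - ((2:int) ^+ n.+1 - 1) * g b.+1 n.+1 by [].
have -> : g b n.+1 = (2:int) ^+ (b * n) - ((2:int) ^+ n - 1) * g b n by [].
rewrite IH.
have E1 : (2 : int) ^+ (b.+1 * n.+1) = 2 ^+ (n * b) * 2 ^+ b * 2 ^+ n * 2.
  by rewrite -!exprD -exprSr; congr (_ ^+ _); rewrite !mulSn !mulnS; lia.
have E2 : (2 : int) ^+ (n.+1 * b) = 2 ^+ (n * b) * 2 ^+ b.
  by rewrite -exprD mulSn addnC.
have E3 : (2 : int) ^+ (b * n) = 2 ^+ (n * b) by rewrite mulnC.
rewrite E1 E2 E3 exprS.
ring.
Qed.

Lemma g_pos n b : (0 < b)%N -> 0 < g b n.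
Proof.
elim: n b => [|n IH] [|b] //= _.
rewrite -/(g b.+1 n.+1) g_rel.
have h1 : 0 < (2 : int) ^+ (n * b) by rewrite exprn_gt0.
have h2 : 1 <= (2 : int) ^+ n by rewrite exprn_ege1.
case: b IH h1 => [|b] IH h1.
  by rewrite expr0 subrr mulr0 mul0r addr0.
have h3 : 0 < g b.+1 n by apply: IH.
have h4 : 1 <= (2 : int) ^+ b.+1 by rewrite exprn_ege1.
have h5 : 0 <= ((2 : int) ^+ n - 1) * ((2 : int) ^+ b.+1 - 1) * g b.+1 n.
  by rewrite !mulr_ge0 // ?subr_ge0 // ltW.
lra.
Qed.

Lemma sum_eq b n :
  \sum_(0 <= i < n.+1) ((2 : int) ^+ (b * i) *
     \prod_(i <= j < n.+1) (1 - (2 : int) ^+ j))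
  = (1 - 2 ^+ n) * 2 ^+ b * g b n.
Proof.
elim: n => [|n IH].
  by rewrite big_nat1 big_nat1 !expr0 subrr !mulr0 mul0r.
rewrite big_nat_recr //= big_nat1.
rewrite (eq_big_nat _ _ (F2 := fun i => (2 : int) ^+ (b * i) *
     (\prod_(i <= j < n.+1) (1 - (2 : int) ^+ j) * (1 - 2 ^+ n.+1)))); last first.
  by move=> i /andP [_ hi]; rewrite big_nat_recr //= ltnW.
under eq_bigr do rewrite mulrA.
rewrite -big_distrl /= IH.
have E : (2 : int) ^+ (b * n.+1) = 2 ^+ (b * n) * 2 ^+ b by rewrite -exprD mulnS addnC.
rewrite E; ring.
Qed.

Theorem lemma3 (b n : nat) (hb : (0 < b)%N) (hn : (0 < n)%N) :
  \sum_(0 <= i < n.+1) ((2 : int) ^+ (b * i) *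
     \prod_(i <= j < n.+1) (1 - (2 : int) ^+ j)) < 0.
Proof.
rewrite sum_eq.
have h1 : 0 < g b n by apply: g_pos.
have h2 : 0 < (2 : int) ^+ b by rewrite exprn_gt0.
have h3 : 1 < (2 : int) ^+ n by rewrite exprn_egt1 // -lt0n.
rewrite pmulr_llt0 // pmulr_llt0 // subr_lt0 //.
Qed.
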